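(* Let $0<a\le 1$, $b=2-a$, $\tfrac12<c_1<1$, and let $(k_a(t),k_b(t))$ be the Markov chain $K$ described in the context, started from any state with $k_a+k_b\ge 2c_1 n$. Let $\tau$ be the hitting time of $(n,n)$. Then there is a constant $C$ depending only on $a,c_1$ such that, uniformly over such starting states, $$\mathbb{E}\,\tau\le \frac{n}{a(2c_1-1)}\big[\log 2n+\log\log 2n+C\big].$$
   Context: The chain $K$ (it records the numbers $k_a,k_b$ of marked $a$-cards and marked $b$-cards in the second marking phase of a biased transposition shuffle of $N=2n$ cards, $n$ of each type). Its states are pairs $(k_a,k_b)$ of integers with $0\le k_a,k_b\le n$ and $k_a+k_b\ge n$. From $(k_a,k_b)$ it moves to $(k_a,k_b+1)$ with probability $\frac{2ab(n-k_b)(k_a+k_b+1)}{(2n)^2}$; to $(k_a+1,k_b)$ with probability $\frac{2a^2(n-k_a)(k_a+k_b+1)}{(2n)^2}$; to $(k_a+1,k_b-1)$ with probability $\frac{2a(b-a)(n-k_a)k_b}{(2n)^2}$; and otherwise stays put. *)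

(* Defs.v *)
From Stdlib Require Import Reals List Arith Bool.
Import ListNotations.
Open Scope R_scope.
Open Scope bool_scope.

Definition sumR (l : list R) : R := fold_right Rplus 0 l.

Definition states (n : nat) : list (nat * nat) :=
  list_prod (seq 0 (S n)) (seq 0 (S n)).

Definition state_eqb (s t : nat * nat) : bool :=
  Nat.eqb (fst s) (fst t) && Nat.eqb (snd s) (snd t).

Definition is_target (n : nat) (s : nat * nat) : bool := state_eqb s (n, n).

Definition Kp (n : nat) (a : R) (s s' : nat * nat) : R :=
  let ka := fst s in let kb := snd s in
  let b := 2 - a in
  let N2 := (2 * INR n) ^ 2 in
  let p_b := 2 * a * b * (INR n - INR kb) * (INR ka + INR kb + 1) / N2 in
  let p_a := 2 * a ^ 2 * (INR n - INR ka) * (INR ka + INR kb + 1) / N2 in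
  let p_s := 2 * a * (b - a) * (INR n - INR ka) * INR kb / N2 in
  if state_eqb s' (ka, S kb) then p_b
  else if state_eqb s' (S ka, kb) then p_a
  else if Nat.eqb (fst s') (S ka) && Nat.eqb (S (snd s')) kb then p_s
  else if state_eqb s' s then 1 - p_b - p_a - p_s
  else 0.

(* qdist n a s0 t s = P_{s0}( K(t) = s  and  tau > t ), where tau is the
   hitting time of (n,n) (tau = 0 if s0 = (n,n)). *)
Fixpoint qdist (n : nat) (a : R) (s0 : nat * nat) (t : nat) : nat * nat -> R :=
  match t with
  | O => fun s => if is_target n s then 0
                  else if state_eqb s s0 then 1 else 0
  | S t' => fun s' => if is_target n s' then 0
                      else sumR (map (fun s => qdist n a s0 t' s * Kp n a s s')
                                     (states n))
  end.

Definition tail_prob (n : nat) (a : R) (s0 : nat * nat) (t : nat) : R :=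
  sumR (map (qdist n a s0 t) (states n)).

(* Partial tail sums: E tau = sup_T sum_{t=0}^T P(tau > t)  (in [0,+oo]). *)
Definition Etau_partial (n : nat) (a : R) (s0 : nat * nat) (T : nat) : R :=
  sum_f_R0 (fun t => tail_prob n a s0 t) T.

(* Main.v *)
Require Import Defs.
From Stdlib Require Import Reals List Arith Lra Lia Psatz ZArith Classical.
Import ListNotations.
Open Scope R_scope.

Lemma sumR_app l1 l2 : sumR (l1 ++ l2) = sumR l1 + sumR l2.
Proof. induction l1; simpl; [ring| rewrite IHl1; ring]. Qed.

Lemma sumR_plus {T} (f g : T -> R) l :
  sumR (map (fun x => f x + g x) l) = sumR (map f l) + sumR (map g l).
Proof. induction l; simpl; [ring| rewrite IHl; ring]. Qed.

Lemma sumR_scal {T} (f : T -> R) c l :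
  sumR (map (fun x => c * f x) l) = c * sumR (map f l).
Proof. induction l; simpl; [ring| rewrite IHl; ring]. Qed.

Lemma sumR_scal_r {T} (f : T -> R) c l :
  sumR (map (fun x => f x * c) l) = sumR (map f l) * c.
Proof. induction l; simpl; [ring| rewrite IHl; ring]. Qed.

Lemma sumR_le {T} (f g : T -> R) l :
  (forall x, In x l -> f x <= g x) -> sumR (map f l) <= sumR (map g l).
Proof.
  induction l; simpl; intros H; [lra|].
  assert (f a <= g a) by auto. assert (sumR (map f l) <= sumR (map g l)) by auto. lra.
Qed.

Lemma sumR_ext {T} (f g : T -> R) l :
  (forall x, In x l -> f x = g x) -> sumR (map f l) = sumR (map g l).
Proof.
  induction l; simpl; intros H; [lra|]. rewrite H by auto. rewrite IHl by auto. ring.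
Qed.

Lemma sumR_nonneg {T} (f : T -> R) l :
  (forall x, In x l -> 0 <= f x) -> 0 <= sumR (map f l).
Proof.
  induction l; simpl; intros H; [lra|].
  assert (0 <= f a) by auto. assert (0 <= sumR (map f l)) by auto. lra.
Qed.

Lemma sumR_zero {T} (f : T -> R) l :
  (forall x, In x l -> f x = 0) -> sumR (map f l) = 0.
Proof.
  induction l; simpl; intros H; auto. rewrite H, IHl; auto. ring.
Qed.

Lemma sumR_swap {T U} (F : T -> U -> R) l1 l2 :
  sumR (map (fun y => sumR (map (fun x => F x y) l1)) l2)
  = sumR (map (fun x => sumR (map (fun y => F x y) l2)) l1).
Proof.
  induction l1; simpl.
  - apply sumR_zero; auto.
  - rewrite (sumR_plus (fun y => F a y) (fun y => sumR (map (fun x => F x y) l1))).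
    rewrite IHl1. ring.
Qed.

Lemma sumR_prod {T U} (f : T * U -> R) l1 l2 :
  sumR (map f (list_prod l1 l2)) = sumR (map (fun i => sumR (map (fun j => f (i,j)) l2)) l1).
Proof.
  induction l1; simpl; auto.
  rewrite map_app, sumR_app, IHl1, map_map. reflexivity.
Qed.

Lemma sum_ind_seq x c len st :
  sumR (map (fun i => if Nat.eqb i x then c else 0) (seq st len))
  = if (st <=? x)%nat && (x <? st + len)%nat then c else 0.
Proof.
  revert st; induction len; intros st; simpl.
  - destruct (st <=? x)%nat eqn:E1; destruct (x <? st + 0)%nat eqn:E2; simpl; auto.
    apply Nat.leb_le in E1; apply Nat.ltb_lt in E2; lia.
  - rewrite IHlen.
    destruct (Nat.eqb_spec st x).
    + subst. destruct (S x <=? x)%nat eqn:E1; simpl.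
      * apply Nat.leb_le in E1; lia.
      * rewrite Nat.leb_refl. destruct (x <? x + S len)%nat eqn:E2; simpl; [ring|].
        apply Nat.ltb_ge in E2; lia.
    + destruct (S st <=? x)%nat eqn:E1; destruct (st <=? x)%nat eqn:E3;
      destruct (x <? S st + len)%nat eqn:E2; destruct (x <? st + S len)%nat eqn:E4; simpl;
      try ring;
      repeat match goal with
      | H : (_ <=? _)%nat = true |- _ => apply Nat.leb_le in H
      | H : (_ <=? _)%nat = false |- _ => apply Nat.leb_gt in H
      | H : (_ <? _)%nat = true |- _ => apply Nat.ltb_lt in H
      | H : (_ <? _)%nat = false |- _ => apply Nat.ltb_ge in H
      end; lia.
Qed.

Lemma leb_aux y n : ((0 <=? y)%nat && (y <? 0 + S n)%nat) = (y <=? n)%nat.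
Proof.
  destruct (y <=? n)%nat eqn:E.
  - apply Nat.leb_le in E. rewrite (proj2 (Nat.leb_le 0 y)) by lia.
    rewrite (proj2 (Nat.ltb_lt y (0 + S n))) by lia. reflexivity.
  - apply Nat.leb_gt in E. rewrite (proj2 (Nat.ltb_ge y (0 + S n))) by lia.
    destruct (0 <=? y)%nat; reflexivity.
Qed.

Lemma sum_pt n x y c :
  sumR (map (fun s => if Nat.eqb (fst s) x && Nat.eqb (snd s) y then c else 0) (states n))
  = if (x <=? n)%nat && (y <=? n)%nat then c else 0.
Proof.
  unfold states. rewrite sumR_prod. cbn [fst snd].
  transitivity (sumR (map (fun i => if Nat.eqb i x then (if (y <=? n)%nat then c else 0) else 0) (seq 0 (S n)))).
  - apply sumR_ext. intros i _. destruct (Nat.eqb i x); cbn [andb].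
    + rewrite sum_ind_seq. rewrite leb_aux. reflexivity.
    + apply sumR_zero; auto.
  - rewrite sum_ind_seq, leb_aux. destruct (x <=? n)%nat; reflexivity.
Qed.

Definition pb n a ka kb := 2 * a * (2 - a) * (INR n - INR kb) * (INR ka + INR kb + 1) / (2 * INR n) ^ 2.
Definition pa n a ka kb := 2 * a ^ 2 * (INR n - INR ka) * (INR ka + INR kb + 1) / (2 * INR n) ^ 2.
Definition ps n a ka kb := 2 * a * ((2 - a) - a) * (INR n - INR ka) * INR kb / (2 * INR n) ^ 2.

Lemma Kp_eq n a ka kb s' : Kp n a (ka,kb) s' =
  if state_eqb s' (ka, S kb) then pb n a ka kb
  else if state_eqb s' (S ka, kb) then pa n a ka kb
  else if Nat.eqb (fst s') (S ka) && Nat.eqb (S (snd s')) kb then ps n a ka kb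
  else if state_eqb s' (ka,kb) then 1 - pb n a ka kb - pa n a ka kb - ps n a ka kb
  else 0.
Proof. reflexivity. Qed.

Ltac eqbs := repeat match goal with
  | H : Nat.eqb _ _ = true |- _ => apply Nat.eqb_eq in H
  | H : Nat.eqb _ _ = false |- _ => apply Nat.eqb_neq in H end.

Lemma Kp_cases n a ka kb x y :
  Kp n a (ka,kb) (x,y) = 0 \/
  (x = ka /\ y = S kb /\ Kp n a (ka,kb) (x,y) = pb n a ka kb) \/
  (x = S ka /\ y = kb /\ Kp n a (ka,kb) (x,y) = pa n a ka kb) \/
  (x = S ka /\ S y = kb /\ Kp n a (ka,kb) (x,y) = ps n a ka kb) \/
  (x = ka /\ y = kb /\ Kp n a (ka,kb) (x,y) = 1 - pb n a ka kb - pa n a ka kb - ps n a ka kb).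
Proof.
  rewrite Kp_eq. unfold state_eqb; cbn [fst snd].
  destruct (Nat.eqb x ka) eqn:E1, (Nat.eqb y (S kb)) eqn:E2,
      (Nat.eqb x (S ka)) eqn:E3, (Nat.eqb y kb) eqn:E4, (Nat.eqb (S y) kb) eqn:E5;
  cbn [andb]; eqbs;
  first [ left; reflexivity
        | right; left; repeat split; auto; lia
        | right; right; left; repeat split; auto; lia
        | right; right; right; left; repeat split; auto; lia
        | right; right; right; right; repeat split; auto; lia ].
Qed.

Lemma Kp_sum n a ka kb (h : nat * nat -> R) :
  (ka <= n)%nat -> (kb <= n)%nat ->
  sumR (map (fun s' => Kp n a (ka,kb) s' * h s') (states n)) =
  pb n a ka kb * h (ka, S kb) + pa n a ka kb * h (S ka, kb) +
  ps n a ka kb * h (S ka, pred kb) +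
  (1 - pb n a ka kb - pa n a ka kb - ps n a ka kb) * h (ka, kb).
Proof.
  intros Hka Hkb.
  set (q := 1 - pb n a ka kb - pa n a ka kb - ps n a ka kb).
  transitivity (sumR (map (fun s' =>
     (if Nat.eqb (fst s') ka && Nat.eqb (snd s') (S kb) then pb n a ka kb * h (ka, S kb) else 0) +
     (if Nat.eqb (fst s') (S ka) && Nat.eqb (snd s') kb then pa n a ka kb * h (S ka, kb) else 0) +
     (if Nat.eqb (fst s') (S ka) && Nat.eqb (S (snd s')) kb then ps n a ka kb * h (S ka, pred kb) else 0) +
     (if Nat.eqb (fst s') ka && Nat.eqb (snd s') kb then q * h (ka, kb) else 0)) (states n))).
  - apply sumR_ext. intros [x y] _. rewrite Kp_eq. unfold state_eqb, q; cbn [fst snd].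
    destruct (Nat.eqb x ka) eqn:E1, (Nat.eqb y (S kb)) eqn:E2,
      (Nat.eqb x (S ka)) eqn:E3, (Nat.eqb y kb) eqn:E4, (Nat.eqb (S y) kb) eqn:E5;
    cbn [andb]; eqbs; subst; try (exfalso; lia); try ring; simpl; ring.
  - rewrite !sumR_plus.
    rewrite !sum_pt.
    rewrite (proj2 (Nat.leb_le ka n) Hka), (proj2 (Nat.leb_le kb n) Hkb). cbn [andb]. rewrite Bool.andb_true_r.
    assert (E1 : (if (S kb <=? n)%nat then pb n a ka kb * h (ka, S kb) else 0) = pb n a ka kb * h (ka, S kb)).
    { destruct (S kb <=? n)%nat eqn:E; auto. apply Nat.leb_gt in E.
      assert (kb = n) by lia. subst. unfold pb. unfold Rdiv. ring. }
    assert (E2 : (if (S ka <=? n)%nat then pa n a ka kb * h (S ka, kb) else 0) = pa n a ka kb * h (S ka, kb)).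
    { destruct (S ka <=? n)%nat eqn:E; auto. apply Nat.leb_gt in E.
      assert (ka = n) by lia. subst. unfold pa. unfold Rdiv. ring. }
    rewrite E1, E2.
    assert (E3 : sumR (map (fun x : nat * nat => if (fst x =? S ka)%nat && (S (snd x) =? kb)%nat
       then ps n a ka kb * h (S ka, Init.Nat.pred kb) else 0) (states n)) = ps n a ka kb * h (S ka, Init.Nat.pred kb)).
    { destruct kb as [|k].
      - rewrite sumR_zero. unfold ps; simpl INR; unfold Rdiv; ring.
        intros x _. destruct (fst x =? S ka)%nat; reflexivity.
      - change (sumR (map (fun x : nat * nat => if (fst x =? S ka)%nat && (snd x =? k)%nat
          then ps n a ka (S k) * h (S ka, k) else 0) (states n)) = ps n a ka (S k) * h (S ka, k)).
        rewrite sum_pt. rewrite (proj2 (Nat.leb_le k n)) by lia.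
        destruct (S ka <=? n)%nat eqn:E; cbn [andb]; auto. apply Nat.leb_gt in E.
        assert (ka = n) by lia. subst. unfold ps. unfold Rdiv. ring. }
    rewrite E3. reflexivity.
Qed.

Definition lam n a c1 := a * (2 * c1 - 1) / INR n.

Lemma div_le x y D : 0 < D -> x <= y * D -> x / D <= y.
Proof. intros HD H. apply Rmult_le_reg_r with D; auto. field_simplify; lra. Qed.
Lemma le_div x y D : 0 < D -> y * D <= x -> y <= x / D.
Proof. intros HD H. apply Rmult_le_reg_r with D; auto. field_simplify; lra. Qed.

Lemma p_bounds n a c1 ka kb :
  0 < a -> a <= 1 -> / 2 < c1 -> c1 < 1 -> (1 <= n)%nat -> (ka <= n)%nat -> (kb <= n)%nat ->
  2 * c1 * INR n <= INR ka + INR kb -> INR ka + INR kb + 1 <= 2 * INR n ->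
  0 <= pb n a ka kb /\ 0 <= pa n a ka kb /\ 0 <= ps n a ka kb /\
  pb n a ka kb + pa n a ka kb + ps n a ka kb <= 1 /\
  lam n a c1 * (INR n - INR ka) <= pa n a ka kb + ps n a ka kb /\
  lam n a c1 * (INR n - INR kb) <= pb n a ka kb.
Proof.
  intros Ha Ha1 Hc Hc1 Hn Hka Hkb Hs Hs2.
  assert (HN : 1 <= INR n) by (apply (le_INR 1); auto).
  assert (HX : INR ka <= INR n) by (apply le_INR; auto).
  assert (HY : INR kb <= INR n) by (apply le_INR; auto).
  assert (HX0 := pos_INR ka). assert (HY0 := pos_INR kb).
  unfold pb, pa, ps, lam.
  set (N := INR n) in *. set (X := INR ka) in *. set (Y := INR kb) in *.
  assert (HD : 0 < (2 * N) ^ 2) by nra.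
  set (D := (2 * N) ^ 2) in *.
  set (u := N - X). set (v := N - Y).
  assert (Hu : 0 <= u) by (unfold u; lra). assert (Hv : 0 <= v) by (unfold v; lra).
  assert (Huv : u + v <= N) by (unfold u, v; nra).
  repeat split.
  - apply le_div; auto. rewrite Rmult_0_l. fold v.
    assert (0 <= 2 * a * (2 - a)) by nra. assert (0 <= X + Y + 1) by lra.
    apply Rmult_le_pos; [apply Rmult_le_pos|]; lra || nra.
  - apply le_div; auto. rewrite Rmult_0_l. fold u.
    assert (0 <= 2 * a ^ 2) by nra. assert (0 <= X + Y + 1) by lra.
    apply Rmult_le_pos; [apply Rmult_le_pos|]; lra || nra.
  - apply le_div; auto. rewrite Rmult_0_l. fold u.
    assert (0 <= 2 * a * (2 - a - a)) by nra.
    apply Rmult_le_pos; [apply Rmult_le_pos|]; lra || nra.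
  - fold u v.
    replace (2 * a * (2 - a) * v * (X + Y + 1) / D + 2 * a ^ 2 * u * (X + Y + 1) / D +
      2 * a * (2 - a - a) * u * Y / D) with
      (2 * a * ((2 - a) * v * (X + Y + 1) + a * u * (X + Y + 1) + (2 - 2 * a) * u * Y) / D)
      by (field; lra).
    apply div_le; auto.
    assert (B1 : (2 - a) * v * (X + Y + 1) <= (2 - a) * v * (2 * N)).
    { apply Rmult_le_compat_l; [nra|lra]. }
    assert (B2 : a * u * (X + Y + 1) <= a * u * (2 * N)).
    { apply Rmult_le_compat_l; [nra|lra]. }
    assert (B3 : (2 - 2 * a) * u * Y <= (2 - 2 * a) * u * N).
    { apply Rmult_le_compat_l; [apply Rmult_le_pos; lra|lra]. }
    assert (B4 : (2 - a) * v * (2 * N) + a * u * (2 * N) + (2 - 2 * a) * u * N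
                 <= 2 * (2 - a) * N * (u + v)).
    { assert (0 <= N*u*(1-a)) by (apply Rmult_le_pos; [apply Rmult_le_pos|]; lra). nra. }
    assert (B5 : 2 * (2 - a) * N * (u + v) <= 2 * (2 - a) * N * N).
    { apply Rmult_le_compat_l; nra. }
    assert (B6 : 2 * a * (2 * (2 - a) * N * N) <= 1 * D).
    { unfold D. assert (0 <= (1-a)^2*(N*N)) by (apply Rmult_le_pos; nra). nra. }
    assert (0 <= 2 * a) by lra.
    nra.
  - fold u.
    replace (2 * a ^ 2 * u * (X + Y + 1) / D + 2 * a * (2 - a - a) * u * Y / D) with
      (2 * a * u * (a * (X + Y + 1) + (2 - 2 * a) * Y) / D) by (field; lra).
    apply le_div; auto.
    replace (a * (2 * c1 - 1) / N * u * D) with (2 * a * u * (2 * (2 * c1 - 1) * N))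
      by (unfold D; field; lra).
    apply Rmult_le_compat_l; [nra|].
    assert (Y >= 2 * c1 * N - N) by lra.
    assert ((2 - 2 * a) * Y >= (2 - 2 * a) * (2 * c1 * N - N)) by nra.
    nra.
  - fold v.
    apply le_div; auto.
    replace (a * (2 * c1 - 1) / N * v * D) with (2 * a * v * (2 * (2 * c1 - 1) * N))
      by (unfold D; field; lra).
    replace (2 * a * (2 - a) * v * (X + Y + 1)) with (2 * a * v * ((2 - a) * (X + Y + 1))) by ring.
    apply Rmult_le_compat_l; [nra|].
    nra.
Qed.

Definition gd n c1 (s : nat * nat) :=
  (fst s <= n)%nat /\ (snd s <= n)%nat /\ 2 * c1 * INR n <= INR (fst s) + INR (snd s).

Lemma nt_sum n ka kb : (ka <= n)%nat -> (kb <= n)%nat -> is_target n (ka,kb) = false ->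
  INR ka + INR kb + 1 <= 2 * INR n.
Proof.
  intros H1 H2 H3. unfold is_target, state_eqb in H3. cbn [fst snd] in H3.
  assert (ka + kb + 1 <= 2 * n)%nat.
  { destruct (Nat.eqb_spec ka n), (Nat.eqb_spec kb n); simpl in H3; try discriminate; lia. }
  apply le_INR in H. rewrite !plus_INR, mult_INR in H. simpl in H. lra.
Qed.

Section S.
Variables (a c1 : R) (n : nat).
Hypotheses (Ha : 0 < a) (Ha1 : a <= 1) (Hc : / 2 < c1) (Hc1 : c1 < 1) (Hn : (1 <= n)%nat).

Lemma Kp_nonneg s s' : gd n c1 s -> is_target n s = false -> 0 <= Kp n a s s'.
Proof.
  destruct s as [ka kb], s' as [x y]. intros [H1 [H2 H3]] Ht. cbn [fst snd] in *.
  pose proof (nt_sum _ _ _ H1 H2 Ht).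
  destruct (p_bounds n a c1 ka kb) as [B1 [B2 [B3 [B4 _]]]]; auto.
  destruct (Kp_cases n a ka kb x y) as [E|[[_ [_ E]]|[[_ [_ E]]|[[_ [_ E]]|[_ [_ E]]]]]];
  rewrite E; lra.
Qed.

Lemma Kp_support s s' : gd n c1 s -> Kp n a s s' <> 0 -> gd n c1 s'.
Proof.
  destruct s as [ka kb], s' as [x y]. intros [H1 [H2 H3]] Hk. cbn [fst snd] in *.
  unfold gd; cbn [fst snd].
  destruct (Kp_cases n a ka kb x y) as [E|[[Ex [Ey E]]|[[Ex [Ey E]]|[[Ex [Ey E]]|[Ex [Ey E]]]]]];
  rewrite E in Hk; [contradiction| | | |]; subst.
  - destruct (Nat.eq_dec kb n).
    + subst. exfalso; apply Hk. unfold pb. unfold Rdiv. ring.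
    + rewrite S_INR. repeat split; try lia; lra.
  - destruct (Nat.eq_dec ka n).
    + subst. exfalso; apply Hk. unfold pa. unfold Rdiv. ring.
    + rewrite S_INR. repeat split; try lia; lra.
  - destruct (Nat.eq_dec ka n).
    + subst. exfalso; apply Hk. unfold ps. unfold Rdiv. ring.
    + rewrite S_INR in *. repeat split; try lia; lra.
  - repeat split; auto.
Qed.

Variable s0 : nat * nat.
Hypothesis Hs0 : gd n c1 s0.

Lemma Inv t s : qdist n a s0 t s = 0 \/
  (gd n c1 s /\ is_target n s = false /\ 0 <= qdist n a s0 t s).
Proof.
  revert s; induction t; intros s; cbn [qdist].
  - destruct (is_target n s) eqn:Et; auto.
    destruct (state_eqb s s0) eqn:Es; auto.
    right. pose proof Es as Es'. unfold state_eqb in Es. apply andb_prop in Es. destruct Es as [E1 E2].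
    apply Nat.eqb_eq in E1, E2.
    assert (s = s0) by (destruct s, s0; cbn [fst snd] in *; subst; auto). subst.
    split; [exact Hs0| split; [auto|]]. rewrite ?Et, ?Es'. lra.
  - destruct (is_target n s) eqn:Et; auto.
    destruct (classic (gd n c1 s)) as [G|G].
    + right. split; [exact G| split; [reflexivity|]]. apply sumR_nonneg. intros x _.
      destruct (IHt x) as [E|[G1 [G2 G3]]].
      * rewrite E; lra.
      * apply Rmult_le_pos; auto. apply Kp_nonneg; auto.
    + left. apply sumR_zero. intros x _.
      destruct (IHt x) as [E|[G1 [G2 G3]]].
      * rewrite E; lra.
      * destruct (Req_dec (Kp n a x s) 0) as [E|E].
        -- rewrite E; ring.
        -- exfalso; apply G. eapply Kp_support; eauto.
Qed.

Lemma step (h h' : nat * nat -> R) t :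
  (forall s, gd n c1 s -> is_target n s = false ->
     sumR (map (fun s' => Kp n a s s' * h s') (states n)) <= h' s) ->
  0 <= h (n, n) ->
  sumR (map (fun s' => qdist n a s0 (S t) s' * h s') (states n)) <=
  sumR (map (fun s => qdist n a s0 t s * h' s) (states n)).
Proof.
  intros Hh Hh0.
  assert (Hpos : forall s s', 0 <= qdist n a s0 t s * Kp n a s s').
  { intros s s'. destruct (Inv t s) as [E|[G1 [G2 G3]]].
    - rewrite E; lra.
    - apply Rmult_le_pos; auto. apply Kp_nonneg; auto. }
  apply Rle_trans with (sumR (map (fun s' =>
    sumR (map (fun s => qdist n a s0 t s * Kp n a s s' * h s') (states n))) (states n))).
  - apply sumR_le. intros s' _. cbn [qdist].
    rewrite (sumR_scal_r (fun s => qdist n a s0 t s * Kp n a s s')).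
    destruct (is_target n s') eqn:Et.
    + unfold is_target, state_eqb in Et. apply andb_prop in Et. destruct Et as [E1 E2].
      apply Nat.eqb_eq in E1, E2. destruct s' as [x y]; cbn [fst snd] in *; subst.
      rewrite Rmult_0_l. apply Rmult_le_pos; auto. apply sumR_nonneg. auto.
    + lra.
  - rewrite sumR_swap. apply sumR_le. intros s _.
    destruct (Inv t s) as [E|[G1 [G2 G3]]].
    + rewrite E. rewrite sumR_zero; [lra|]. intros; ring.
    + transitivity (qdist n a s0 t s * sumR (map (fun s' => Kp n a s s' * h s') (states n))).
      * rewrite <- sumR_scal. right. apply sumR_ext. intros; ring.
      * apply Rmult_le_compat_l; auto.
Qed.

End S.

Section S.
Variables (a c1 : R) (n : nat).
Hypotheses (Ha : 0 < a) (Ha1 : a <= 1) (Hc : / 2 < c1) (Hc1 : c1 < 1) (Hn : (1 <= n)%nat).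

Let lm := lam n a c1.
Let r := 1 - lm.
Definition Bf k := (1 - lam n a c1) ^ k.
Definition Af k := (1 - lam n a c1) ^ k * (1 + INR k * lam n a c1 / (1 - lam n a c1)).
Definition Lf k (s : nat * nat) := (INR n - INR (fst s)) * Af k + (INR n - INR (snd s)) * Bf k.

Lemma lam_pos : 0 < lam n a c1.
Proof.
  unfold lam. assert (1 <= INR n) by (apply (le_INR 1); auto).
  apply Rdiv_lt_0_compat; nra.
Qed.

Lemma lam_le : lam n a c1 <= a * (2 * c1 - 1).
Proof.
  unfold lam. assert (1 <= INR n) by (apply (le_INR 1); auto).
  apply div_le; [lra|]. assert (0 < a * (2 * c1 - 1)) by (apply Rmult_lt_0_compat; lra). nra.
Qed.

Lemma r_pos : 0 < 1 - lam n a c1.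
Proof. pose proof lam_le. nra. Qed.

Lemma Bf_nonneg k : 0 <= Bf k.
Proof. apply pow_le. pose proof r_pos; lra. Qed.

Lemma AB k : Bf k <= Af k.
Proof.
  unfold Af, Bf. pose proof r_pos. pose proof lam_pos. pose proof (pos_INR k).
  assert (0 <= INR k * lam n a c1 / (1 - lam n a c1)).
  { apply le_div; auto. rewrite Rmult_0_l. nra. }
  assert (0 <= (1 - lam n a c1) ^ k) by (apply pow_le; lra). nra.
Qed.

Lemma Af_S k : Af (S k) = (1 - lam n a c1) * Af k + lam n a c1 * Bf k.
Proof. unfold Af, Bf. pose proof r_pos. rewrite S_INR. simpl pow. field. lra. Qed.

Lemma Bf_S k : Bf (S k) = (1 - lam n a c1) * Bf k.
Proof. reflexivity. Qed.

Lemma drift k s : gd n c1 s -> is_target n s = false ->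
  sumR (map (fun s' => Kp n a s s' * Lf k s') (states n)) <= Lf (S k) s.
Proof.
  destruct s as [ka kb]. intros [H1 [H2 H3]] Ht. cbn [fst snd] in *.
  pose proof (nt_sum _ _ _ H1 H2 Ht).
  destruct (p_bounds n a c1 ka kb) as [B1 [B2 [B3 [B4 [B5 B6]]]]]; auto.
  rewrite Kp_sum by auto.
  assert (Eps : ps n a ka kb * Lf k (S ka, pred kb) =
     ps n a ka kb * ((INR n - INR ka - 1) * Af k + (INR n - INR kb + 1) * Bf k)).
  { unfold Lf; cbn [fst snd]. destruct kb as [|j].
    - unfold ps. simpl INR. unfold Rdiv. ring.
    - simpl pred. rewrite (S_INR j), S_INR. ring. }
  rewrite Eps. unfold Lf; cbn [fst snd]. rewrite !S_INR. rewrite Af_S, Bf_S.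
  pose proof (AB k). pose proof (Bf_nonneg k).
  set (A := Af k) in *. set (B := Bf k) in *.
  set (u := INR n - INR ka) in *. set (v := INR n - INR kb) in *.
  set (l := lam n a c1) in *.
  assert (F1 : l * u * (A - B) <= (pa n a ka kb + ps n a ka kb) * (A - B)).
  { apply Rmult_le_compat_r; lra. }
  assert (F2 : l * v * B <= pb n a ka kb * B).
  { apply Rmult_le_compat_r; lra. }
  assert (F3 : 0 <= pa n a ka kb * B) by (apply Rmult_le_pos; lra).
  replace (INR n - (INR ka + 1)) with (u - 1) by (unfold u; ring).
  replace (INR n - (INR kb + 1)) with (v - 1) by (unfold v; ring).
  replace (INR n - INR ka - 1) with (u - 1) by (unfold u; ring).
  replace (INR n - INR kb + 1) with (v + 1) by (unfold v; ring).
  nra.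
Qed.

Variable s0 : nat * nat.
Hypothesis Hs0 : gd n c1 s0.

Lemma base (h : nat * nat -> R) : 0 <= h (n, n) ->
  sumR (map (fun s => qdist n a s0 0 s * h s) (states n)) <= h s0.
Proof.
  intros Hh.
  destruct s0 as [x y] eqn:Es0. destruct Hs0 as [G1 [G2 G3]]. cbn [fst snd] in *.
  apply Rle_trans with (sumR (map (fun s => if Nat.eqb (fst s) x && Nat.eqb (snd s) y then h (x,y) else 0) (states n))).
  - apply sumR_le. intros s _. cbn [qdist]. unfold state_eqb. cbn [fst snd].
    destruct (is_target n s) eqn:Et.
    + unfold is_target, state_eqb in Et. apply andb_prop in Et. destruct Et as [E1 E2].
      apply Nat.eqb_eq in E1, E2. destruct s as [p q]; cbn [fst snd] in *; subst.
      destruct (Nat.eqb n x) eqn:E3, (Nat.eqb n y) eqn:E4; cbn [andb]; try lra.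
      apply Nat.eqb_eq in E3, E4. subst. lra.
    + destruct (Nat.eqb (fst s) x && Nat.eqb (snd s) y) eqn:E; [|lra].
      apply andb_prop in E. destruct E as [E1 E2]. apply Nat.eqb_eq in E1, E2.
      destruct s as [p q]; cbn [fst snd] in *; subst. lra.
  - rewrite sum_pt. rewrite (proj2 (Nat.leb_le x n)), (proj2 (Nat.leb_le y n)) by auto. simpl. lra.
Qed.

Lemma ML t : forall k, sumR (map (fun s => qdist n a s0 t s * Lf k s) (states n)) <= Lf (k + t) s0.
Proof.
  induction t; intros k.
  - rewrite Nat.add_0_r. apply base. unfold Lf; cbn [fst snd]. lra.
  - eapply Rle_trans.
    + apply (step a c1 n Ha Ha1 Hc Hc1 Hn s0 Hs0 (Lf k) (Lf (S k))).
      * intros; apply drift; auto.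
      * unfold Lf; cbn [fst snd]. lra.
    + replace (k + S t)%nat with (S k + t)%nat by lia. apply IHt.
Qed.

Lemma tail_le1 t : tail_prob n a s0 t <= 1.
Proof.
  unfold tail_prob.
  replace (sumR (map (qdist n a s0 t) (states n))) with
    (sumR (map (fun s => qdist n a s0 t s * (fun _ => 1) s) (states n)))
    by (apply sumR_ext; intros; ring).
  induction t.
  - apply base; lra.
  - eapply Rle_trans; [|exact IHt].
    apply (step a c1 n Ha Ha1 Hc Hc1 Hn s0 Hs0 (fun _ => 1) (fun _ => 1)); [|lra].
    intros [ka kb] [H1 [H2 H3]] Ht. cbn [fst snd] in *.
    rewrite Kp_sum by auto. lra.
Qed.

Lemma tail_leL t : tail_prob n a s0 t <= Lf t s0.
Proof.
  unfold tail_prob.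
  apply Rle_trans with (sumR (map (fun s => qdist n a s0 t s * Lf 0 s) (states n))).
  - apply sumR_le. intros s _.
    destruct (Inv a c1 n Ha Ha1 Hc Hc1 Hn s0 Hs0 t s) as [E|[[G1 [G2 G3]] [Gt Gq]]].
    + rewrite E; lra.
    + destruct s as [ka kb]; cbn [fst snd] in *.
      pose proof (nt_sum _ _ _ G1 G2 Gt).
      assert (1 <= Lf 0 (ka, kb)).
      { unfold Lf, Af, Bf; cbn [fst snd pow INR]. 
        assert (INR ka <= INR n) by (apply le_INR; auto).
        assert (INR kb <= INR n) by (apply le_INR; auto).
        replace (1 + 0 * lam n a c1 / (1 - lam n a c1)) with 1 by (unfold Rdiv; ring). lra. }
      nra.
  - apply (ML t 0).
Qed.

End S.

Lemma nat_near x : 0 <= x -> exists N0 : nat, x <= INR N0 <= x + 1.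
Proof.
  intros Hx. destruct (archimed x) as [H1 H2].
  assert (0 <= up x)%Z.
  { assert (IZR 0 < IZR (up x)) by (simpl; lra). apply lt_IZR in H. lia. }
  exists (Z.to_nat (up x)). rewrite INR_IZR_INZ, Z2Nat.id by auto. lra.
Qed.

Lemma exp_pow' y k : exp y ^ k = exp (INR k * y).
Proof.
  induction k.
  - simpl. rewrite Rmult_0_l, exp_0. reflexivity.
  - rewrite S_INR. simpl pow. rewrite IHk.
    replace ((INR k + 1) * y) with (INR k * y + y) by ring. rewrite exp_plus. ring.
Qed.

Lemma exp_le' x y : x <= y -> exp x <= exp y.
Proof. intros [H|H]; [left; apply exp_increasing; auto| subst; lra]. Qed.

Lemma ln_le' x y : 0 < x -> x <= y -> ln x <= ln y.
Proof. intros Hx [H|H]; [left; apply ln_increasing; auto| subst; lra]. Qed.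

Lemma ln2_gt : / 2 < ln 2.
Proof.
  assert (1 < ln 4).
  { rewrite <- (ln_exp 1) at 1. apply ln_increasing. apply exp_pos.
    pose proof exp_le_3. lra. }
  replace 4 with (2 * 2) in H by ring. rewrite ln_mult in H by lra. lra.
Qed.

Lemma ln_le_id x : 0 < x -> ln x <= x - 1.
Proof. intros Hx. pose proof (exp_ineq1_le (ln x)). rewrite exp_ln in H; lra. Qed.

Section S.
Variables (a c1 : R) (n : nat).
Hypotheses (Ha : 0 < a) (Ha1 : a <= 1) (Hc : / 2 < c1) (Hc1 : c1 < 1) (Hn : (1 <= n)%nat).

Definition Gf k := (1 - lam n a c1) ^ k * (2 / lam n a c1 + INR k / (1 - lam n a c1)).

Lemma Gf_tele k : Gf k - Gf (S k) = Af a c1 n k.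
Proof.
  pose proof (r_pos a c1 n Ha Ha1 Hc Hc1 Hn). pose proof (lam_pos a c1 n Ha Hc Hn).
  unfold Gf, Af. rewrite S_INR. simpl pow. field. lra.
Qed.

Lemma Gf_nonneg k : 0 <= Gf k.
Proof.
  pose proof (r_pos a c1 n Ha Ha1 Hc Hc1 Hn). pose proof (lam_pos a c1 n Ha Hc Hn).
  unfold Gf. apply Rmult_le_pos. apply pow_le; lra.
  assert (0 <= 2 / lam n a c1) by (apply le_div; lra).
  assert (0 <= INR k / (1 - lam n a c1)) by (apply le_div; auto; rewrite Rmult_0_l; apply pos_INR).
  lra.
Qed.

Variable s0 : nat * nat.
Hypothesis Hs0 : gd n c1 s0.

Lemma tail_leA t : tail_prob n a s0 t <= 2 * INR n * Af a c1 n t.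
Proof.
  eapply Rle_trans. apply (tail_leL a c1 n Ha Ha1 Hc Hc1 Hn s0 Hs0).
  destruct s0 as [x y]. destruct Hs0 as [G1 [G2 G3]]. cbn [fst snd] in *.
  unfold Lf; cbn [fst snd].
  pose proof (AB a c1 n Ha Ha1 Hc Hc1 Hn t). pose proof (Bf_nonneg a c1 n Ha Ha1 Hc Hc1 Hn t).
  assert (INR x <= INR n) by (apply le_INR; auto).
  assert (INR y <= INR n) by (apply le_INR; auto).
  pose proof (pos_INR x). pose proof (pos_INR y).
  nra.
Qed.

Lemma gsum N0 T : Etau_partial n a s0 T <=
  if (S T <=? N0)%nat then INR (S T) else INR N0 + 2 * INR n * (Gf N0 - Gf (S T)).
Proof.
  unfold Etau_partial. induction T.
  - simpl sum_f_R0. destruct (1 <=? N0)%nat eqn:E.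
    + apply (tail_le1 a c1 n Ha Ha1 Hc Hc1 Hn s0 Hs0).
    + apply Nat.leb_gt in E. assert (N0 = 0%nat) by lia. subst.
      rewrite Gf_tele. simpl INR. rewrite Rplus_0_l. apply tail_leA.
  - simpl sum_f_R0.
    destruct (S (S T) <=? N0)%nat eqn:E.
    + apply Nat.leb_le in E. rewrite (proj2 (Nat.leb_le (S T) N0)) in IHT by lia.
      pose proof (tail_le1 a c1 n Ha Ha1 Hc Hc1 Hn s0 Hs0 (S T)).
      rewrite (S_INR (S T)). lra.
    + apply Nat.leb_gt in E.
      assert (IH : sum_f_R0 (fun t => tail_prob n a s0 t) T <= INR N0 + 2 * INR n * (Gf N0 - Gf (S T))).
      { destruct (S T <=? N0)%nat eqn:E2; auto. apply Nat.leb_le in E2.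
        assert (N0 = S T) by lia. subst. lra. }
      pose proof (tail_leA (S T)). pose proof (Gf_tele (S T)). nra.
Qed.

Lemma gsum' N0 T : Etau_partial n a s0 T <= INR N0 + 2 * INR n * Gf N0.
Proof.
  eapply Rle_trans. apply (gsum N0 T).
  pose proof (Gf_nonneg (S T)). assert (0 <= INR n) by apply pos_INR.
  destruct (S T <=? N0)%nat eqn:E.
  - apply Nat.leb_le in E. apply le_INR in E. pose proof (Gf_nonneg N0). nra.
  - nra.
Qed.

End S.

Theorem mainTheorem5 (a c1 : R) :
  0 < a -> a <= 1 -> / 2 < c1 -> c1 < 1 ->
  exists C : R,
    forall (n ka kb : nat),
      (1 <= n)%nat -> (ka <= n)%nat -> (kb <= n)%nat ->
      2 * c1 * INR n <= INR ka + INR kb ->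
      forall T : nat,
        Etau_partial n a (ka, kb) T <=
          INR n / (a * (2 * c1 - 1)) *
            (ln (2 * INR n) + ln (ln (2 * INR n)) + C).
Proof.
  intros Ha Ha1 Hc Hc1.
  set (d := 1 - a * (2 * c1 - 1)).
  assert (Hac : 0 < a * (2 * c1 - 1)) by (apply Rmult_lt_0_compat; lra).
  assert (Hd : 0 < d) by (unfold d; nra).
  pose proof ln2_gt as Hl2.
  exists (1 + 2 / ln 2 + 2 / d + 1 / (d * ln 2)).
  intros n ka kb Hn Hka Hkb Hs T.
  assert (Hs0 : gd n c1 (ka, kb)) by (repeat split; auto).
  pose proof (lam_pos a c1 n Ha Hc Hn) as Hlp.
  pose proof (lam_le a c1 n Ha Hc Hn) as Hll.
  pose proof (r_pos a c1 n Ha Ha1 Hc Hc1 Hn) as Hr.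
  assert (HN : 1 <= INR n) by (apply (le_INR 1); auto).
  set (N := INR n) in *.
  set (l := lam n a c1) in *.
  assert (HK : / l = N / (a * (2 * c1 - 1))) by (unfold l, lam; fold N; field; lra).
  rewrite <- HK.
  set (L := ln (2 * N)).
  assert (HL : ln 2 <= L) by (apply ln_le'; lra).
  assert (HLp : 0 < L) by lra.
  assert (HlnL : ln L <= L - 1) by (apply ln_le_id; auto).
  assert (Hx0 : 0 <= L + ln L).
  { assert (0 <= ln (2 * N * L)).
    { rewrite <- ln_1. apply ln_le'; lra || nra. }
    rewrite ln_mult in H by nra. exact H. }
  destruct (nat_near ((L + ln L) / l)) as [N0 [HN1 HN2]].
  { apply le_div; lra. }
  eapply Rle_trans. apply (gsum' a c1 n Ha Ha1 Hc Hc1 Hn (ka, kb) Hs0 N0 T).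
  assert (Hpow : (1 - l) ^ N0 <= / (2 * N * L)).
  { apply Rle_trans with (exp (- l) ^ N0).
    - apply pow_incr. split; [lra|]. pose proof (exp_ineq1_le (- l)). lra.
    - rewrite exp_pow'. apply Rle_trans with (exp (- (L + ln L))).
      + apply exp_le'. 
        assert ((L + ln L) <= l * INR N0).
        { apply Rmult_le_reg_r with (/ l). apply Rinv_0_lt_compat; lra.
          replace (l * INR N0 * / l) with (INR N0) by (field; lra). exact HN1. }
        lra.
      + rewrite exp_Ropp, exp_plus, exp_ln by lra. unfold L. rewrite exp_ln by lra. lra. }
  unfold Gf. fold l.
  set (K := / l).
  assert (HK1 : 1 <= K).
  { unfold K. rewrite <- Rinv_1. apply Rinv_le_contravar; lra. }
  assert (HlK : l * K = 1) by (unfold K; field; lra).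
  assert (Hrd : d <= 1 - l) by (unfold d; lra).
  assert (HN0b : INR N0 <= K * (L + ln L) + 1).
  { replace ((L + ln L) / l) with (K * (L + ln L)) in HN2 by (unfold K, Rdiv; ring). lra. }
  assert (Hpos0 : 0 <= (1 - l) ^ N0) by (apply pow_le; lra).
  assert (HB : 2 / l + INR N0 / (1 - l) <= 2 * K + K * (2 * L + 1) / d).
  { assert (2 / l = 2 * K) by (unfold K, Rdiv; ring).
    assert (INR N0 / (1 - l) <= K * (2 * L + 1) / d).
    { apply Rle_trans with (INR N0 / d).
      - unfold Rdiv. apply Rmult_le_compat_l. apply pos_INR.
        apply Rinv_le_contravar; lra.
      - unfold Rdiv. apply Rmult_le_compat_r. left; apply Rinv_0_lt_compat; lra. nra. }
    lra. }
  assert (H2 : 2 * N * ((1 - l) ^ N0 * (2 / l + INR N0 / (1 - l)))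
               <= (2 * K + K * (2 * L + 1) / d) / L).
  { assert (0 <= 2 / l + INR N0 / (1 - l)).
    { assert (0 <= 2 / l) by (apply le_div; lra).
      assert (0 <= INR N0 / (1 - l)) by (apply le_div; [lra|]; rewrite Rmult_0_l; apply pos_INR). lra. }
    apply Rle_trans with (2 * N * (/ (2 * N * L) * (2 * K + K * (2 * L + 1) / d))).
    - apply Rmult_le_compat_l; [lra|]. apply Rmult_le_compat; auto.
    - right. field. split; lra. }
  assert (H3 : (2 * K + K * (2 * L + 1) / d) / L <=
               K * (2 / ln 2 + 2 / d + 1 / (d * ln 2))).
  { replace ((2 * K + K * (2 * L + 1) / d) / L) with (K * (2 / L + 2 / d + 1 / (d * L)))
      by (field; split; lra).
    apply Rmult_le_compat_l; [lra|].
    assert (2 / L <= 2 / ln 2).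
    { unfold Rdiv. apply Rmult_le_compat_l; [lra|]. apply Rinv_le_contravar; lra. }
    assert (1 / (d * L) <= 1 / (d * ln 2)).
    { unfold Rdiv. apply Rmult_le_compat_l; [lra|]. apply Rinv_le_contravar; nra. }
    lra. }
  replace (K * (L + ln L + (1 + 2 / ln 2 + 2 / d + 1 / (d * ln 2)))) with
    (K * (L + ln L) + K + K * (2 / ln 2 + 2 / d + 1 / (d * ln 2))) by ring.
  change (INR n) with N. lra.
Qed.
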